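(* Let $T$ be a skew-nontrivial tree and let $S\subseteq W^{\emptyset}_-(T)$. Then $S$ is a PSD forcing set of $SD_2(T)$ if and only if $S$ is a skew forcing set of $T$.
   Context: Skew forcing: vertices are colored blue or white; if any vertex $u$ (blue or white) has exactly one white neighbor $v$, then $u$ may force $v$ to become blue; a skew forcing set is a set of initially blue vertices from which repeated forcing turns all vertices blue. PSD forcing: if $B$ is the current blue set, $C$ a component of $G-B$, and $u$ a blue vertex with $N_G(u)\cap V(C)=\{v\}$, then $u$ may force $v$; a PSD forcing set is defined analogously. $B^{\emptyset}_-(T)$ is the set of vertices that become blue when the skew forcing rule is applied starting from the empty set until no more forces are possible, and $W^{\emptyset}_-(T)=V(T)\setminus B^{\emptyset}_-(T)$. The skew-nontrivial subgraph $\check G$ of $G$ is obtained by computing $B^{\emptyset}_-(G)$, then deleting each vertex of $B^{\emptyset}_-(G)$ all of whose neighbors are in $B^{\emptyset}_-(G)$, and deleting each edge with both endpoints in $B^{\emptyset}_-(G)$; $T$ is skew-nontrivial if $\check T=T$. The special distance-2 graph $SD_2(T)$ has vertex set $W^{\emptyset}_-(T)$, with $u,w$ adjacent iff $u\ne w$ and $N_T(u)\cap N_T(w)\neq\emptyset$. *)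

(* Defs.v *)
From mathcomp Require Import all_boot.
Set Warnings "-notation-overridden".
Set Implicit Arguments. Unset Strict Implicit. Unset Printing Implicit Defensive.

Definition simple_graph (T : finType) (e : rel T) := symmetric e /\ irreflexive e.

Definition is_tree (T : finType) (e : rel T) :=
  [/\ simple_graph e, 0 < #|T|, (forall x y, connect e x y) &
      (forall c : seq T, 3 <= size c -> ~~ (cycle e c && uniq c))].

Inductive reach (T : finType) (step : {set T} -> {set T} -> Prop)
  : {set T} -> {set T} -> Prop :=
| reach_refl B : reach step B B
| reach_cons B B' B'' : step B B' -> reach step B' B'' -> reach step B B''.

Definition skew_force (T : finType) (e : rel T) (B : {set T}) (u v : T) :=
  [set w | e u w & w \notin B] == [set v].
Definition skew_step (T : finType) (e : rel T) (B B' : {set T}) :=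
  exists u v, skew_force e B u v /\ B' = v |: B.
Definition skew_forcing_set (T : finType) (e : rel T) (S : {set T}) :=
  reach (skew_step e) S setT.

(* B0 is the set B^0_-(G): the set of blue vertices obtained by applying the
   skew forcing rule starting from the empty set until no more forces are
   possible. *)
Definition skew_final (T : finType) (e : rel T) (B0 : {set T}) :=
  reach (skew_step e) set0 B0 /\ (forall u v, ~ skew_force e B0 u v).

Definition skew_nontrivial (T : finType) (e : rel T) (B0 : {set T}) :=
  (forall v, v \in B0 -> ~~ [forall w, e v w ==> (w \in B0)]) /\
  (forall u v, e u v -> ~~ ((u \in B0) && (v \in B0))).

(* PSD forcing: w is in the component of G - B containing the white vertex v. *)
Definition white_conn (T : finType) (e : rel T) (B : {set T}) :=
  connect (fun x y => [&& e x y, x \notin B & y \notin B]).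
Definition psd_force (T : finType) (e : rel T) (B : {set T}) (u v : T) :=
  [&& u \in B, v \notin B &
      [set w | [&& e u w, w \notin B & white_conn e B v w]] == [set v]].
Definition psd_step (T : finType) (e : rel T) (B B' : {set T}) :=
  exists u v, psd_force e B u v /\ B' = v |: B.
Definition psd_forcing_set (T : finType) (e : rel T) (S : {set T}) :=
  reach (psd_step e) S setT.

(* The special distance-2 graph SD_2(T): vertex set W = V(T) \ B0, with u ~ w
   iff u <> w and they have a common neighbour in T. *)
Notation SD2_vertex B0 := {x | x \notin B0}.
Definition SD2 (T : finType) (e : rel T) (B0 : {set T}) : rel (SD2_vertex B0) :=
  fun u w => (val u != val w) && [exists x, e (val u) x && e (val w) x].
Arguments SD2 {T} e B0 _ _.

(* Main.v *)
Require Import Defs.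
From mathcomp Require Import all_boot.
Set Implicit Arguments. Unset Strict Implicit. Unset Printing Implicit Defensive.

Lemma reach_trans (T : finType) (R : {set T} -> {set T} -> Prop) X Y Z :
  reach R X Y -> reach R Y Z -> reach R X Z.
Proof.
elim=> // B B' B'' st _ IH /IH; exact: reach_cons.
Qed.

Lemma path_avoid (T : finType) (e : rel T) (w a : T) (p : seq T) :
  path (fun x y => [&& e x y, x != w & y != w]) a p -> w \notin p.
Proof.
elim: p a => //= y p IH a /andP[/and3P[_ _ yw] /IH].
by rewrite inE negb_or eq_sym yw.
Qed.

Lemma no_bypass (T : finType) (e : rel T) (w a c : T) :
  is_tree e -> e w a -> e w c -> a != c ->
  ~ connect (fun x y => [&& e x y, x != w & y != w]) a c.
Proof.
case=> [[esym eirr] _ _ acyc] ewa ewc ac /connectP[p0 pp0 lp0].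
case: (shortenP pp0) lp0 => p pp up _ lp.
have aw : a != w by apply/eqP=> aw; move: ewa; rewrite aw eirr.
have wp := path_avoid pp.
have := acyc (w :: a :: p).
have sz : 3 <= size (w :: a :: p).
  by case: p {pp up wp} lp => [/= lp|] //; rewrite lp eqxx in ac.
move/(_ sz); apply/negP/negPn; apply/andP; split.
- rewrite /cycle /= ewa rcons_path /=; apply/andP; split.
    by apply: (sub_path _ pp) => x y /and3P[].
  by rewrite -lp esym.
- rewrite cons_uniq up andbT inE negb_or eq_sym aw wp //.
Qed.

Lemma other_nb (T : finType) (e : rel T) (B0 : {set T}) (y y' : T) :
  (forall u v, ~ skew_force e B0 u v) -> e y y' -> y' \notin B0 ->
  exists z, [/\ e y z, z \notin B0 & z != y'].
Proof.
move=> fin eyy' y'B.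
case: (pickP (fun z => [&& e y z, z \notin B0 & z != y'])) => [z /and3P[]|H].
  by move=> *; exists z.
case: (fin y y'); apply/eqP/setP => z; rewrite !inE.
case: (z =P y') => [->|/eqP nz]; first by rewrite eyy' y'B.
by have := H z; rewrite /= nz andbT => ->.
Qed.

Lemma W_indep (T : finType) (e : rel T) (B0 : {set T}) :
  is_tree e -> (forall u v, ~ skew_force e B0 u v) ->
  forall u v, e u v -> u \notin B0 -> v \notin B0 -> False.
Proof.
move=> tr fin u v euv uB vB.
have [[esym eirr] _ _ acyc] := tr.
pose eW := fun x y => [&& e x y, x \notin B0 & y \notin B0].
have grow : forall n, exists y y' rest,
    [/\ path eW y (y' :: rest), uniq (y :: y' :: rest) & size rest = n].
  elim=> [|n [y [y' [rest [pth un sz]]]]].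
    exists v, u, [::]; split => //=; last by rewrite inE andbT; apply/eqP=> vu;
      move: euv; rewrite vu eirr.
    by rewrite /eW esym euv uB vB.
  move: (pth) => /= /andP[/and3P[eyy' yB y'B] pth'].
  have [z [eyz zB zy']] := other_nb fin eyy' y'B.
  case zin: (z \in y' :: rest).
    move: zin pth un; rewrite inE (negbTE zy') /= => /splitPr [r1 r2] pth un.
    have c3 := acyc [:: z, y, y' & r1].
    have : 2 < size [:: z, y, y' & r1] by [].
    move/c3 => /negP; case; apply/andP; split.
      move: pth => /andP[_]; rewrite cat_path => /andP[p1 /= /andP[/and3P[ez _ _] _]].
      rewrite /cycle /= rcons_path esym eyz eyy' ez andbT /=.
      by apply: (sub_path _ p1) => a b /and3P[].
    have : uniq ((y :: y' :: r1) ++ z :: r2) by [].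
    rewrite cat_uniq => /and3P[u1 /hasPn u2 _].
    by rewrite cons_uniq u1 andbT; apply: u2; rewrite mem_head.
  exists z, y, (y' :: rest); split => //.
    by rewrite /= {2}/eW eyy' yB y'B /= -/eW pth' /eW esym eyz zB yB.
    move: un; rewrite [uniq (y :: _)]cons_uniq => /andP[-> ->]; rewrite inE zin orbF !andbT.
    by apply/eqP => zy; move: eyz; rewrite zy eirr.
  by rewrite /= sz.
have [y [y' [rest [_ un sz]]]] := grow #|T|.
move: (max_card (mem (y :: y' :: rest))); rewrite (card_uniqP un) /= sz.
by rewrite ltnNge leqnSn.
Qed.

Lemma skew_mono (T : finType) (e : rel T) X X' :
  reach (skew_step e) X X' -> forall Y : {set T}, X \subset Y ->
  exists Y' : {set T}, reach (skew_step e) Y Y' /\ X' \subset Y'.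
Proof.
elim => [B|B B1 B2 [u [v [f ->]]] _ IH] Y sub.
  by exists Y; split => //; constructor.
case vY: (v \in Y).
  by apply: IH; rewrite subUset sub1set vY sub.
have st : skew_step e Y (v |: Y).
  exists u, v; split => //; apply/eqP/setP => w; rewrite !inE.
  move/eqP/setP: f => /(_ w); rewrite !inE.
  case: (w =P v) => [-> /andP[-> _]|_ H]; first by rewrite vY.
  apply/negbTE/negP => /andP[euw wY]; move: H; rewrite euw /=.
  by move/negbFE => wB; move/negP: wY; apply; apply: (subsetP sub).
have [Y' [r s]] := IH (v |: Y) (setUS _ sub).
by exists Y'; split => //; apply: reach_cons st r.
Qed.

Lemma skew_incr (T : finType) (e : rel T) X X' :
  reach (skew_step e) X X' -> X \subset X'.
Proof.
elim => // B B1 B2 [u [v [_ ->]]] _ H.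
by apply: subset_trans H; apply: subsetUr.
Qed.

Lemma psd_to_skew (T : finType) (e : rel T) (B0 : {set T}) :
  symmetric e ->
  forall Y Y', reach (psd_step (SD2 e B0)) Y Y' ->
  forall X : {set T}, B0 \subset X -> (forall y, y \in Y -> val y \in X) ->
  exists X' : {set T}, [/\ reach (skew_step e) X X', B0 \subset X' &
                 forall y, y \in Y' -> val y \in X'].
Proof.
move=> esym Y Y'.
elim => [Y0|Y0 Y1 Y2 [w [v [/and3P[wY vY /eqP Hset] ->]]] _ IH] X B0X YX.
  by exists X; split => //; constructor.
case vX: (val v \in X).
  by apply: IH => // y; rewrite !inE => /orP [/eqP ->|/YX] //.
have vin : v \in [set z | [&& SD2 e B0 w z, z \notin Y0 & white_conn (SD2 e B0) Y0 v z]].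
  by rewrite Hset set11.
move: vin; rewrite inE => /and3P[/andP[_ /existsP[x /andP[ewx evx]]] _ _].
have st : skew_step e X (val v |: X).
  exists x, (val v); split => //; apply/eqP/setP => t; rewrite !inE.
  apply/andP/eqP => [[ext tX]|->]; last by rewrite esym evx vX.
  case: (t =P val v) => // /eqP tv.
  have tB : t \notin B0 by apply: contra tX; apply: (subsetP B0X).
  pose t' : SD2_vertex B0 := exist _ t tB.
  suff : t' \in [set z | [&& SD2 e B0 w z, z \notin Y0 & white_conn (SD2 e B0) Y0 v z]].
    by rewrite Hset inE => /eqP <-.
  have t'Y : t' \notin Y0 by apply/negP => /YX; rewrite /= (negbTE tX).
  rewrite inE; apply/and3P; split => //.
    rewrite /SD2 /=; apply/andP; split.
      by apply: contraNneq tX => <-; apply: YX.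
    by apply/existsP; exists x; rewrite ewx esym.
  apply: connect1; rewrite vY t'Y !andbT /SD2 /= eq_sym tv /=.
  by apply/existsP; exists x; rewrite evx esym.
have H2 : forall y, y \in v |: Y0 -> val y \in val v |: X.
  move=> y; rewrite !inE => /orP [/eqP ->|/YX ->]; first by rewrite eqxx.
  by rewrite orbT.
have [X' [r b c]] := IH (val v |: X) (subset_trans B0X (subsetUr _ _)) H2.
by exists X'; split => //; apply: reach_cons st r.
Qed.

Lemma lift_conn (T : finType) (e : rel T) (B0 : {set T}) (Z : {set SD2_vertex B0})
   (w' : SD2_vertex B0) :
  is_tree e -> (forall u v, ~ skew_force e B0 u v) -> w' \in Z ->
  forall x y, white_conn (SD2 e B0) Z x y ->
  connect (fun a b => [&& e a b, a != val w' & b != val w']) (val x) (val y).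
Proof.
move=> tr fin w'Z x y /connectP [p pth ->].
have [[esym eirr] _ _ _] := tr.
elim: p x pth => [|y1 p IH] x /=; first by rewrite connect0.
move=> /andP[/and3P[/andP[_ /existsP[c /andP[exc eyc]]] xZ yZ] pth].
apply: (connect_trans _ (IH _ pth)).
have cB : c \in B0.
  by apply/negPn/negP => cB; apply: (W_indep tr fin exc (valP x) cB).
have cw : c != val w' by apply: contraTneq cB => ->; apply: (valP w').
have xw : val x != val w'.
  by apply: contraNneq xZ => /val_inj ->.
have yw : val y1 != val w'.
  by apply: contraNneq yZ => /val_inj ->.
apply: (connect_trans (y := c)); apply: connect1.
  by rewrite exc xw cw.
by rewrite esym eyc cw yw.
Qed.

Lemma skew_to_psd (T : finType) (e : rel T) (B0 : {set T}) :
  is_tree e -> (forall u v, ~ skew_force e B0 u v) ->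
  forall X X', reach (skew_step e) X X' ->
  forall Z : {set SD2_vertex B0}, (forall x : SD2_vertex B0, val x \in X -> x \in Z) ->
  exists Z' : {set SD2_vertex B0}, reach (psd_step (SD2 e B0)) Z Z' /\
     (forall x : SD2_vertex B0, val x \in X' -> x \in Z').
Proof.
move=> tr fin; have [[esym eirr] _ _ _] := tr.
move=> X X'; elim => [B|B B1 B2 [u [v [/eqP Hset ->]]] _ IH] Z XZ.
  by exists Z; split => //; constructor.
have vin : v \in [set w | e u w & w \notin B] by rewrite Hset set11.
move: vin; rewrite inE => /andP[euv vB].
suff [Z1 [r1 c1]] : exists Z1, reach (psd_step (SD2 e B0)) Z Z1 /\
     (forall x : SD2_vertex B0, val x \in v |: B -> x \in Z1).
  have [Z' [r' c']] := IH Z1 c1.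
  by exists Z'; split => //; apply: reach_trans r1 r'.
case vB0: (v \in B0).
  exists Z; split; first by constructor.
  move=> x; rewrite !inE => /orP [/eqP xv|/XZ] //.
  by move: (valP x); rewrite xv vB0.
pose v' : SD2_vertex B0 := exist _ v (negbT vB0).
case v'Z: (v' \in Z).
  exists Z; split; first by constructor.
  move=> x; rewrite !inE => /orP [/eqP xv|/XZ] //.
  by have -> : x = v' by apply: val_inj.
exists (v' |: Z); split; last first.
  move=> x; rewrite !inE => /orP [/eqP xv|/XZ ->]; last by rewrite orbT.
  by rewrite (_ : x = v') ?eqxx //; apply: val_inj.
apply: (reach_cons _ (reach_refl _ _)).
have uB : u \in B0.
  by apply/negPn/negP => uB; apply: (W_indep tr fin euv uB (negbT vB0)).
have [w [euw wB wv]] := other_nb fin euv (negbT vB0).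
have wB' : w \in B.
  have := Hset; move/setP/(_ w); rewrite !inE euw (negbTE wv) /=.
  by move/negbFE.
pose w' : SD2_vertex B0 := exist _ w wB.
have w'Z : w' \in Z by apply: XZ.
exists w', v'; split => //; apply/and3P; split => //; first by rewrite v'Z.
apply/eqP/setP => z; rewrite !inE.
apply/idP/eqP => [/and3P[sd zZ conn]|->].
  apply/eqP; apply/negP => /negP zv.
  move: sd => /andP[wz /existsP[b /andP[ewb ezb]]].
  have zv2 : val z != v by apply: contra zv => /eqP zv; apply/eqP/val_inj.
  case: (b =P u) => [bu | /eqP bu].
    have := Hset; move/setP/(_ (val z)); rewrite !inE (negbTE zv2) -bu esym ezb /=.
    by move/negbFE => /XZ; rewrite (negbTE zZ).
  have bB : b \in B0.
    by apply/negPn/negP => bB; apply: (W_indep tr fin ewb wB bB).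
  have ewu : e w u by rewrite esym.
  have ub : u != b by rewrite eq_sym.
  apply: (no_bypass tr ewu ewb ub).
  have uw : u != w by apply: contraTneq uB => ->.
  have vw : v != w by rewrite eq_sym.
  have bw : b != w by apply: contraTneq bB => ->.
  have zw : val z != w by rewrite eq_sym.
  apply: (connect_trans (y := v)); first by apply: connect1; rewrite euv uw vw.
  apply: (connect_trans (y := val z)); last by apply: connect1; rewrite ezb zw bw.
  exact: (lift_conn tr fin w'Z conn).
rewrite v'Z /= /white_conn connect0 andbT /SD2 /= wv /=.
by apply/existsP; exists u; rewrite esym euw esym euv.
Qed.

Unset Implicit Arguments.

Theorem theorem6p6 (T : finType) (e : rel T) (B0 : {set T}) :
  is_tree e -> skew_final e B0 -> skew_nontrivial e B0 ->
  forall S : {set T}, S \subset ~: B0 ->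
  (psd_forcing_set (SD2 e B0) [set x : SD2_vertex B0 | val x \in S]
   <-> skew_forcing_set e S).
Proof.
move=> tr [r0 fin] _ S sub; have [[esym _] _ _ _] := tr; split.
- move=> ps.
  have [Y0 [rY0 sY0]] := skew_mono r0 (sub0set S).
  have SY0 := skew_incr rY0.
  have [X' [rX bX cX]] := psd_to_skew esym ps sY0
      (fun y (yS : y \in [set x : SD2_vertex B0 | val x \in S]) =>
         subsetP SY0 _ (eq_ind _ is_true yS _ (in_set _ _))).
  rewrite /skew_forcing_set; have -> : setT = X'.
    apply/setP => t; rewrite inE; symmetry.
    case tB: (t \in B0); first by apply: (subsetP bX).
    exact: (cX (exist _ t (negbT tB)) (in_setT _)).
  exact: reach_trans rY0 rX.
- move=> sk.
  have [Z' [r c]] := @skew_to_psd T e B0 tr fin _ _ sk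
     [set x : SD2_vertex B0 | val x \in S] (fun x xS => ltac:(by rewrite inE)).
  rewrite /psd_forcing_set; have -> : setT = Z' by apply/setP => x; rewrite inE c ?inE.
  exact: r.
Qed.
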